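(* Let $(B,\lfloor\cdot,\cdot\rfloor,\|\cdot\|)$ be an SSDB space, $q(b):=\tfrac12\lfloor b,b\rfloor$, let $f\colon B\to\,]{-}\infty,\infty]$ be a proper convex lower semicontinuous BC--function and $g\colon B\to\,]{-}\infty,\infty]$ a proper convex lower semicontinuous TBC--function. Then $\mathrm{dom}\,f-\mathrm{dom}\,g=B$ if and only if ${\cal P}_q(f)-{\cal N}_q(g)=B$.
   Context: An SSDB space is a triple $(B,\lfloor\cdot,\cdot\rfloor,\|\cdot\|)$ where $B$ is a nonzero real vector space, $\lfloor\cdot,\cdot\rfloor$ a symmetric bilinear form, $(B,\|\cdot\|)$ a Banach space, and there is a linear isometry $\iota$ of $B$ onto $B^*$ with $\langle b,\iota(c)\rangle=\lfloor b,c\rfloor$. $\mathrm{dom}\,f:=\{b\colon f(b)\in\mathbb{R}\}$, $f^@(c):=\sup_{b}[\lfloor b,c\rfloor-f(b)]$. A BC--function is a proper convex $f$ with $f^@(b)\ge f(b)\ge q(b)$ for all $b$; a TBC--function is a proper convex $g$ with $g^@(-b)\ge g(b)\ge -q(b)$ for all $b$. ${\cal P}_q(f):=\{b\colon f(b)=q(b)\}$, ${\cal N}_q(g):=\{b\colon g(b)=-q(b)\}$. *)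

(* Defs.v *)
From HB Require Import structures.
From mathcomp Require Import all_boot all_order all_algebra.
From mathcomp Require Import all_classical all_reals all_analysis.
Set Implicit Arguments. Unset Strict Implicit. Unset Printing Implicit Defensive.
Import Order.TTheory GRing.Theory Num.Theory.
Import numFieldNormedType.Exports.
Local Open Scope classical_set_scope.
Local Open Scope ring_scope.

Section SSDB.
Context {R : realType} {B : completeNormedModType R}.

Definition sym_bilinear (bf : B -> B -> R) : Prop :=
  (forall b c, bf b c = bf c b) /\
  (forall a b b' c, bf (a *: b + b') c = a * bf b c + bf b' c).

(* The map iota : c |-> bf(., c) is a linear isometry of B ONTO B^*:
   - isometry: ||c|| = sup_{||b|| <= 1} |bf b c| (operator norm of bf(.,c)),
     written out as "upper bound" + "approximated within any eps > 0";
   - onto: every continuous linear functional on B is of the form bf(., c).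
   (linearity of iota follows from bilinearity.) *)
Definition SSDB (bf : B -> B -> R) : Prop :=
  (exists b : B, b != 0) /\
  sym_bilinear bf /\
  (forall c : B,
      (forall b : B, `|b| <= 1 -> `|bf b c| <= `|c|) /\
      (forall e : R, 0 < e -> exists b : B, `|b| <= 1 /\ `|c| - e < `|bf b c|)) /\
  (forall phi : {linear B -> R^o}, continuous phi ->
      exists c : B, forall b, phi b = bf b c).

Definition qf (bf : B -> B -> R) (b : B) : R := (bf b b) / 2.

Local Open Scope ereal_scope.

Definition edom (f : B -> \bar R) : set B := [set b | f b \is a fin_num].

Definition proper_fun (f : B -> \bar R) : Prop :=
  (forall b, f b != -oo) /\ (exists b, f b != +oo).

Definition convex_fun (f : B -> \bar R) : Prop :=
  forall (x y : B) (t : R), (0 < t < 1)%R ->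
    f (t *: x + (1 - t) *: y)%R <= t%:E * f x + (1 - t)%:E * f y.

Definition fat (bf : B -> B -> R) (f : B -> \bar R) (c : B) : \bar R :=
  ereal_sup [set (bf b c)%:E - f b | b in [set: B]].

Definition BC_fun (bf : B -> B -> R) (f : B -> \bar R) : Prop :=
  proper_fun f /\ convex_fun f /\
  (forall b, fat bf f b >= f b /\ f b >= (qf bf b)%:E).

Definition TBC_fun (bf : B -> B -> R) (g : B -> \bar R) : Prop :=
  proper_fun g /\ convex_fun g /\
  (forall b, fat bf g (- b)%R >= g b /\ g b >= (- qf bf b)%:E).

Definition Pq (bf : B -> B -> R) (f : B -> \bar R) : set B :=
  [set b | f b = (qf bf b)%:E].

Definition Nq (bf : B -> B -> R) (g : B -> \bar R) : set B :=
  [set b | g b = (- qf bf b)%:E].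

Definition diff_is_all (X Y : set B) : Prop :=
  forall b : B, exists x y, X x /\ Y y /\ b = (x - y)%R.

End SSDB.

(* Main.v *)
Require Import Defs.
From HB Require Import structures.
From mathcomp Require Import all_boot all_order all_algebra.
From mathcomp Require Import all_classical all_reals all_analysis.
From mathcomp Require Import ring lra.
Import Order.TTheory GRing.Theory Num.Theory.
Import numFieldNormedType.Exports.
Local Open Scope classical_set_scope.
Local Open Scope ring_scope.

Section HBS.
Variables (R : realType) (X : lmodType R).

Definition subl (q : X -> R) :=
  (forall x y, q (x + y) <= q x + q y) /\ (forall t x, 0 < t -> q (t *: x) <= t * q x).

Lemma subl0 q : subl q -> q 0 = 0.
Proof.
move=> [qa qh]; apply/eqP; rewrite eq_le; apply/andP; split.
  have := qh (2^-1) 0 ltac:(by rewrite invr_gt0); rewrite scaler0.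
  by move=> h; nra.
have := qh 2 0 ltac:(by []); rewrite scaler0 => h; nra.
Qed.

Lemma sublN q x : subl q -> - q (- x) <= q x.
Proof.
move=> sq; have := (proj1 sq) x (- x); rewrite subrr subl0 //.
by move=> h; lra.
Qed.

Lemma sublZ q t x : subl q -> 0 <= t -> t * q x <= q (t *: x).
Proof.
move=> sq; rewrite le0r => /orP[/eqP->|t0].
  by rewrite scale0r subl0 // mul0r.
have := (proj2 sq) t^-1 (t *: x) ltac:(by rewrite invr_gt0).
rewrite scalerA mulVf ?gt_eqF // scale1r => h.
have : t * q x <= t * (t^-1 * q (t *: x)) by rewrite ler_pM2l.
by rewrite mulrA mulfV ?gt_eqF // mul1r.
Qed.

Lemma minimal_linear q : subl q ->
  (forall r, subl r -> (forall x, r x <= q x) -> forall x, q x <= r x) ->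
  forall a, q (- a) = - q a.
Proof.
move=> sq qmin a.
pose S := fun x : X => [set q (x + t *: a) - t * q a | t in [set t : R | 0 <= t]].
pose r := fun x => inf (S x).
have Sne x : S x !=set0 by exists (q (x + 0 *: a) - 0 * q a); exists 0 => //=.
have Slb x : has_lbound (S x).
  exists (- q (- x)) => _ [t /= t0 <-].
  have h1 := (proj1 sq) (x + t *: a) (- x).
  rewrite addrC addKr in h1.
  have h2 := @sublZ q t a sq t0.
  lra.
have rle x t : 0 <= t -> r x <= q (x + t *: a) - t * q a.
  by move=> t0; apply: ge_inf => //; exists t.
have sr : subl r.
  split.
  - move=> x y; rewrite -lerBlDr; apply: lb_le_inf => // _ [t /= t0 <-].
    suff : r (x + y) - (q (x + t *: a) - t * q a) <= r y by move=> h; lra.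
    apply: lb_le_inf => // _ [s /= s0 <-].
    have h0 := rle (x + y) (t + s) (addr_ge0 t0 s0).
    have := (proj1 sq) (x + t *: a) (y + s *: a).
    have -> : x + t *: a + (y + s *: a) = x + y + (t + s) *: a.
      by rewrite scalerDl addrACA.
    move=> h; rewrite mulrDl in h0; lra.
  - move=> c x c0; rewrite -ler_pdivrMl //; apply: lb_le_inf => // _ [t /= t0 <-].
    rewrite ler_pdivrMl //.
    apply: le_trans (rle (c *: x) (c * t) ltac:(exact: mulr_ge0 (ltW c0) t0)) _.
    have := (proj2 sq) c (x + t *: a) c0.
    rewrite scalerDr scalerA => h; rewrite mulrBr mulrA; lra.
have rq x : r x <= q x.
  by apply: le_trans (rle x 0 (lexx _)) _; rewrite scale0r addr0 mul0r subr0.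
have := qmin r sr rq (- a).
have := rle (- a) 1 ler01; rewrite scale1r addNr subl0 // mul1r.
have := @sublN q a sq.
move=> h1 h2 h3; apply/eqP; rewrite eq_le; apply/andP; split; lra.
Qed.

Lemma HahnBanach (p : X -> R) : subl p ->
  exists l : X -> R, (forall x y, l (x + y) = l x + l y) /\
    (forall a x, l (a *: x) = a * l x) /\ (forall x, l x <= p x).
Proof.
move=> sp.
pose T := {q : X -> R | subl q /\ forall x, q x <= p x}.
pose Rel := fun (q1 q2 : T) => `[< forall x, sval q2 x <= sval q1 x >].
have t0 : T by exists p; split=> //.
have [[q [sq qp]] qmin] : exists t, premaximal Rel t.
  apply: (ZL_preorder t0).
  - by move=> t; apply/asboolP.
  - by move=> a b c /asboolP h1 /asboolP h2; apply/asboolP => x; exact: le_trans (h2 x) (h1 x).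
  move=> A Atot.
  have [[a0 Aa0]|A0] := pselect (A !=set0); last first.
    by exists t0 => s As; exfalso; apply: A0; exists s.
  pose I := fun x => [set sval s x | s in A].
  have Ine x : I x !=set0 by exists (sval a0 x); exists a0.
  have Ilb x : has_lbound (I x).
    exists (- p (- x)) => _ [s As <-]; case: s {As} => s [ss sp'] /=.
    have := @sublN s x ss; have := sp' (- x); lra.
  have Ile x s : A s -> inf (I x) <= sval s x.
    by move=> As; apply: ge_inf => //; exists s.
  pose m := fun x => inf (I x).
  have sm : subl m.
    split.
    - move=> x y; rewrite -lerBlDr; apply: lb_le_inf => // _ [s1 As1 <-].
      suff : m (x + y) - sval s1 x <= m y by move=> h; lra.
      apply: lb_le_inf => // _ [s2 As2 <-].
      have [/asboolP h|/asboolP h] := Atot s1 s2 As1 As2.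
      + have := Ile (x + y) s2 As2; have := (proj1 (proj2_sig s2)).1 x y.
        have := h x; move=> *; lra.
      + have := Ile (x + y) s1 As1; have := (proj1 (proj2_sig s1)).1 x y.
        have := h y; move=> *; lra.
    - move=> c x c0; rewrite -ler_pdivrMl //; apply: lb_le_inf => // _ [s As <-].
      rewrite ler_pdivrMl //.
      have := Ile (c *: x) s As; have := (proj1 (proj2_sig s)).2 c x c0.
      move=> *; lra.
  have mp x : m x <= p x.
    have := Ile x a0 Aa0; have := (proj2 (proj2_sig a0)) x; move=> *; lra.
  exists (exist _ m (conj sm mp)) => s As; apply/asboolP => x /=.
  exact: Ile.
have qN : forall a, q (- a) = - q a.
  apply: (@minimal_linear q sq) => r sr rq x.
  have rp : forall x, r x <= p x by move=> y; exact: le_trans (rq y) (qp y).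
  have /asboolP := qmin (exist _ r (conj sr rp)) ltac:(by apply/asboolP).
  exact.
have q0 := subl0 q sq.
have qD x y : q (x + y) = q x + q y.
  apply/eqP; rewrite eq_le (proj1 sq) /=.
  have := (proj1 sq) (- x) (- y); rewrite -opprD !qN; move=> h; lra.
exists q; split => //; split => // c x.
have [c0|c0|->] := ltgtP c 0; last by rewrite scale0r q0 mul0r.
- have := @sublZ q (- c) x sq ltac:(lra); have := (proj2 sq) (- c) x ltac:(lra).
  rewrite scaleNr qN => h1 h2; lra.
- have := @sublZ q c x sq ltac:(lra); have := (proj2 sq) c x c0; move=> *; lra.
Qed.
End HBS.
Arguments subl {R X}.

Section G.
Variables (R : realType) (X : completeNormedModType R).

Lemma algE (w a b : X) (m : R) : m != 0 ->
  m *: (w + ((1 - m) / m) *: (w - a) - b) = w - ((1 - m) *: a + m *: b).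
Proof.
move=> m0; rewrite scalerBr scalerDr scalerA mulrC divfK // scalerBr scalerBl scale1r.
rewrite opprD !addrA; congr (_ - _ - _).
by rewrite addrAC subrr add0r.
Qed.

Lemma algD (a b c d : X) (t m : R) :
  (t *: a + m *: b) - (t *: c + m *: d) = t *: (a - c) + m *: (b - d).
Proof. by rewrite opprD addrACA -!scalerBr. Qed.

Lemma algS (a b : X) (m : R) : (1 - m) *: a + m *: b - a = m *: (b - a).
Proof. by rewrite scalerBl scale1r scalerBr addrAC [a - _]addrC addrK addrC. Qed.

Lemma geo_cvg (u : nat -> X) (C : R) :
  (forall n, `|u n.+1 - u n| <= C * (2^-1) ^+ n) -> cvgn u.
Proof.
move=> hu.
have C0 : 0 <= C by have := hu 0%N; rewrite expr0 mulr1; apply: le_trans.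
have -> : u = (fun _ => u 0%N) + series (telescope u).
  by apply/funext => n; rewrite [in LHS](eq_sum_telescope u n).
apply: is_cvgD; first exact: is_cvg_cst.
apply: normed_cvg.
apply: (@series_le_cvg _ _ (geometric C (2^-1))).
- by move=> n /=.
- by move=> n; rewrite /geometric /= mulr_ge0 // exprn_ge0.
- by move=> n /=; rewrite /telescope /=; exact: hu.
apply/cvg_ex; eexists; apply: cvg_geometric_series.
by rewrite ger0_norm // invf_lt1 // ltr1n.
Qed.

Definition mu (n : nat) : R := (2^-1) ^+ n.+1.

Lemma mu_gt0 n : 0 < mu n.
Proof. by rewrite /mu exprn_gt0 // invr_gt0. Qed.
Lemma mu_lt1 n : mu n < 1.
Proof. by rewrite /mu exprn_ilt1 // ?invr_ge0 ?invf_lt1 ?ltr1n. Qed.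
Lemma muS n : mu n.+1 = mu n / 2.
Proof. by rewrite /mu exprS mulrC. Qed.

Fixpoint stt (c : X -> X * X) (w : X) (n : nat) : X * X :=
  match n with
  | 0%N => c w
  | n'.+1 => let s := stt c w n' in
     let y := w + ((1 - mu n') / mu n') *: (w - (s.1 - s.2)) in
     ((1 - mu n') *: s.1 + mu n' *: (c y).1, (1 - mu n') *: s.2 + mu n' *: (c y).2)
  end.

Variables (D1 D2 : set X) (F1 F2 : X -> R).
Hypothesis cvx1 : forall x y t, D1 x -> D1 y -> 0 < t < 1 ->
  D1 (t *: x + (1 - t) *: y) /\ F1 (t *: x + (1 - t) *: y) <= t * F1 x + (1 - t) * F1 y.
Hypothesis cvx2 : forall x y t, D2 x -> D2 y -> 0 < t < 1 ->
  D2 (t *: x + (1 - t) *: y) /\ F2 (t *: x + (1 - t) *: y) <= t * F2 x + (1 - t) * F2 y.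
Hypothesis cl1 : forall (s : nat -> X) x M, (forall n, D1 (s n) /\ F1 (s n) <= M) ->
  s @ \oo --> x -> D1 x /\ F1 x <= M.
Hypothesis cl2 : forall (s : nat -> X) x M, (forall n, D2 (s n) /\ F2 (s n) <= M) ->
  s @ \oo --> x -> D2 x /\ F2 x <= M.

Lemma cvx_step (D : set X) (F : X -> R) N a b t :
  (forall x y t, D x -> D y -> 0 < t < 1 ->
    D (t *: x + (1 - t) *: y) /\ F (t *: x + (1 - t) *: y) <= t * F x + (1 - t) * F y) ->
  0 < t < 1 -> D a -> D b -> `|a| <= N -> `|b| <= N -> F a <= N -> F b <= N ->
  D (t *: a + (1 - t) *: b) /\ `|t *: a + (1 - t) *: b| <= N /\ F (t *: a + (1 - t) *: b) <= N.
Proof.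
move=> cvx /andP[t0 t1] Da Db na nb Fa Fb.
have [h1 h2] := cvx a b t Da Db ltac:(apply/andP; split => //).
split => //; split.
  apply: le_trans (ler_normD _ _) _; rewrite !normrZ !ger0_norm; try lra.
  by nra.
by apply: le_trans h2 _; nra.
Qed.

Lemma hy_lem r (w E : X) n : 0 < r -> `|w| < r / 2 -> `|E| < mu n * (r / 2) ->
  `|w + ((1 - mu n) / mu n) *: E| < r.
Proof.
move=> r0 hw hE.
apply: le_lt_trans (ler_normD _ _) _; rewrite normrZ.
have m0 := mu_gt0 n; have m1 := mu_lt1 n.
rewrite ger0_norm; last by apply: divr_ge0; lra.
have : (1 - mu n) / mu n * `|E| <= (1 - mu n) * (r / 2).
  rewrite -mulrA ler_wpM2l //; first lra.
  by rewrite ler_pdivrMl // ltW.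
have : 0 < mu n * r by rewrite mulr_gt0.
lra.
Qed.

Lemma RU N r : 0 < r ->
  (forall y, `|y| < r -> forall e, 0 < e -> exists x z, D1 x /\ D2 z /\
     `|x| <= N /\ `|z| <= N /\ F1 x <= N /\ F2 z <= N /\ `|y - (x - z)| < e) ->
  forall w, `|w| < r / 2 -> exists x z, D1 x /\ D2 z /\ F1 x <= N /\ F2 z <= N /\ x - z = w.
Proof.
move=> r0 happ w hw.
have : forall y, exists pr : X * X, (`|y| < r -> D1 pr.1 /\ D2 pr.2 /\
     `|pr.1| <= N /\ `|pr.2| <= N /\ F1 pr.1 <= N /\ F2 pr.2 <= N /\ `|y - (pr.1 - pr.2)| < r / 4).
  move=> y; case: (pselect (`|y| < r)) => hy; last by exists (0, 0).
  have [x [z H]] := happ y hy (r / 4) ltac:(lra).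
  by exists (x, z) => _.
case/choice => c hc.
pose st := stt c w.
have inv n : D1 (st n).1 /\ D2 (st n).2 /\ `|(st n).1| <= N /\ `|(st n).2| <= N /\
   F1 (st n).1 <= N /\ F2 (st n).2 <= N /\ `|w - ((st n).1 - (st n).2)| < mu n * (r / 2).
  elim: n => [|n [D1n [D2n [n1 [n2 [f1 [f2 en]]]]]]].
    have := hc w ltac:(lra); rewrite /st /= /mu expr1 => -[? [? [? [? [? [? h]]]]]].
    by do ![split => //]; lra.
  set y := w + ((1 - mu n) / mu n) *: (w - ((st n).1 - (st n).2)).
  have hy : `|y| < r by apply: hy_lem.
  have [h1 [h2 [h3 [h4 [h5 [h6 h7]]]]]] := hc y hy.
  have m0 := mu_gt0 n; have m1 := mu_lt1 n.
  have tt : 0 < 1 - mu n < 1 by apply/andP; split; lra.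
  have e1 : 1 - (1 - mu n) = mu n by ring.
  have := @cvx_step D1 F1 N _ _ _ cvx1 tt D1n h1 n1 h3 f1 h5; rewrite e1 => -[? [? ?]].
  have := @cvx_step D2 F2 N _ _ _ cvx2 tt D2n h2 n2 h4 f2 h6; rewrite e1 => -[? [? ?]].
  do ![split => //].
  rewrite /st /= -/(st n) -/y algD -algE ?gt_eqF // normrZ gtr0_norm // muS.
  have : mu n * `|y - ((c y).1 - (c y).2)| < mu n * (r / 4) by rewrite ltr_pM2l.
  lra.
have mu0 : mu @ \oo --> 0.
  rewrite (_ : mu = geometric (2^-1) (2^-1)).
    by apply: cvg_geometric; rewrite ger0_norm // invf_lt1 // ltr1n.
  by apply/funext => n; rewrite /mu /geometric /= exprS.
have cvs (j : bool) : cvgn (fun n => if j then (st n).1 else (st n).2).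
  apply: (@geo_cvg _ N) => n.
  rewrite /st /=.
  set y := w + ((1 - mu n) / mu n) *: (w - ((stt c w n).1 - (stt c w n).2)).
  have [D1n [D2n [n1 [n2 _]]]] := inv n.
  have [|_ [_ [h3 [h4 _]]]] := hc y.
    by apply: hy_lem => //; case: (inv n) => _ [_ [_ [_ [_ [_ ?]]]]].
  have m0 := mu_gt0 n.
  have e : mu n * (N + N) = N * (2^-1) ^+ n by rewrite /mu exprS; field.
  case: j; rewrite algS normrZ gtr0_norm // -e; (apply: ler_wpM2l; first exact: ltW).
  - exact: le_trans (ler_normB _ _) (lerD h3 n1).
  - exact: le_trans (ler_normB _ _) (lerD h4 n2).
have [Xl hX] := (cvg_ex _).1 (cvs true).
have [Zl hZ] := (cvg_ex _).1 (cvs false).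
have [DX FX] : D1 Xl /\ F1 Xl <= N.
  by apply: (cl1 _ Xl N _ hX) => n; case: (inv n) => ? [_ [_ [_ [? _]]]].
have [DZ FZ] : D2 Zl /\ F2 Zl <= N.
  by apply: (cl2 _ Zl N _ hZ) => n; case: (inv n) => _ [? [_ [_ [_ [? _]]]]].
exists Xl, Zl; do ![split => //].
have hE : (fun n => (st n).1 - (st n).2) @ \oo --> w.
  apply/cvgrPdist_lt => e e0.
  have e2 : 0 < e / (r / 2) by rewrite divr_gt0 // divr_gt0.
  move/cvgrPdist_lt: mu0 => /(_ _ e2).
  apply: filterS => n; rewrite sub0r normrN gtr0_norm ?mu_gt0 // => hn.
  case: (inv n) => _ [_ [_ [_ [_ [_ h]]]]].
  rewrite ltr_pdivlMr ?divr_gt0 // in hn; lra.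
have hXZ : (fun n => (st n).1 - (st n).2) @ \oo --> Xl - Zl by apply: cvgB.
exact: (cvg_unique (@norm_hausdorff _ X) hXZ hE).
Qed.

Lemma algH (y x0 a : X) :
  y - (2^-1 *: a + (1 - 2^-1) *: (- x0)) = 2^-1 *: (2 *: y + x0 - a).
Proof.
have -> : (1 - 2^-1 : R) = 2^-1 by field.
rewrite scalerN !scalerBr scalerDr scalerA mulVf ?pnatr_eq0 // scale1r.
by rewrite opprD opprK addrA addrAC.
Qed.

Lemma nat_ub (a : R) : exists n : nat, a <= n%:R.
Proof. by exists (Num.truncn a).+1; apply/ltW/Num.Theory.truncnS_gt. Qed.

Hypothesis cq : forall u, exists x z, D1 x /\ D2 z /\ u = x - z.

Lemma baire_approx : exists N r, 0 < r /\ forall y, `|y| < r -> forall e, 0 < e ->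
  exists x z, D1 x /\ D2 z /\ `|x| <= N /\ `|z| <= N /\ F1 x <= N /\ F2 z <= N /\
    `|y - (x - z)| < e.
Proof.
pose A (n : nat) := [set a | exists x z, D1 x /\ D2 z /\ `|x| <= n%:R /\ `|z| <= n%:R /\
   F1 x <= n%:R /\ F2 z <= n%:R /\ a = x - z].
have Amono n m : (n <= m)%N -> A n `<=` A m.
  move=> nm a [x [z [? [? [h1 [h2 [h3 [h4 ->]]]]]]]]; exists x, z.
  have nm' : n%:R <= m%:R :> R by rewrite ler_nat.
  by do ![split => //]; apply: le_trans nm'.
have Acov u : exists n, A n u.
  have [x [z [Dx [Dz ->]]]] := cq u.
  have [n hn] := nat_ub (`|x| + `|z| + `|F1 x| + `|F2 z|).
  exists n, x, z; do ![split => //].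
  - have := normr_ge0 z; have := normr_ge0 (F1 x); have := normr_ge0 (F2 z); lra.
  - have := normr_ge0 x; have := normr_ge0 (F1 x); have := normr_ge0 (F2 z); lra.
  - have := ler_norm (F1 x); have := normr_ge0 x; have := normr_ge0 z;
    have := normr_ge0 (F2 z); lra.
  - have := ler_norm (F2 z); have := normr_ge0 x; have := normr_ge0 z;
    have := normr_ge0 (F1 x); lra.
have [n ndense] : exists n, ~ dense (~` closure (A n)).
  apply/existsNP => alld.
  have := @Baire R X (fun n => ~` closure (A n)) ltac:(move=> n; split;
     [exact/closed_openC/closed_closure | exact: alld]).
  move=> /(_ setT ltac:(by exists 0) openT) [u [_ hu]].
  have [k Aku] := Acov u.
  exact: (hu k Logic.I) (subset_closure Aku).
have [W0 [[x0 ox0] OA]] := denseNE ndense.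
have [r r0 bxr] : nbhs_ball x0 W0 by apply/nbhs_ballP/open_nbhs_nbhs.
have [m Am] := Acov (- x0).
pose N := maxn n m.
exists N%:R, (r / 2); split; first by rewrite divr_gt0.
move=> y hy e e0.
have cl : closure (A n) (2 *: y + x0).
  apply: contrapT => ncl.
  have : (W0 `&` ~` closure (A n)) (2 *: y + x0).
    split => //; apply: bxr; rewrite -ball_normE /ball_ /= opprD addrCA subrr addr0 normrN.
    by rewrite normrZ ger0_norm //; lra.
  by rewrite OA.
have e2 : 0 < 2 * e by rewrite mulr_gt0.
have [a [[x1 [z1 [D1x [D1z [nx1 [nz1 [fx1 [fz1 ea]]]]]]]] ba]] := cl _ (nbhsx_ballx _ _ e2).
move: ba; rewrite -ball_normE /ball_ /= => ba.
have [x2 [z2 [D2x [D2z [nx2 [nz2 [fx2 [fz2 ex0]]]]]]]] := Am.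
have nN : n%:R <= N%:R :> R by rewrite ler_nat leq_maxl.
have mN : m%:R <= N%:R :> R by rewrite ler_nat leq_maxr.
have tt : 0 < (2^-1 : R) < 1 by apply/andP; split; [rewrite invr_gt0|rewrite invf_lt1 // ltr1n].
have [DX [nX FX]] := @cvx_step D1 F1 N%:R _ _ _ cvx1 tt D1x D2x
  (le_trans nx1 nN) (le_trans nx2 mN) (le_trans fx1 nN) (le_trans fx2 mN).
have [DZ [nZ FZ]] := @cvx_step D2 F2 N%:R _ _ _ cvx2 tt D1z D2z
  (le_trans nz1 nN) (le_trans nz2 mN) (le_trans fz1 nN) (le_trans fz2 mN).
do 2 eexists; do ![split; first eassumption].
rewrite algD -ea -ex0 algH normrZ ger0_norm ?invr_ge0 //.
lra.
Qed.

Lemma core (m : R) : (forall z, D1 z -> D2 z -> m <= F1 z + F2 z) ->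
  exists l : X -> R, (forall x y, l (x + y) = l x + l y) /\
    (forall a x, l (a *: x) = a * l x) /\
    (forall r, exists M, forall x, `|x| <= r -> `|l x| <= M) /\
    (forall x z, D1 x -> D2 z -> m + l (x - z) <= F1 x + F2 z).
Proof.
move=> hm.
have [N [r [r0 happ]]] := baire_approx.
have rep := @RU N r r0 happ.
set rho := r / 2 in rep.
have rho0 : 0 < rho by rewrite divr_gt0.
pose S := fun u : X => [set e | exists t x z, 0 < t /\ D1 x /\ D2 z /\ x - z = t *: u /\
   e = (F1 x + F2 z - m) / t].
pose p := fun u => inf (S u).
pose sig := fun u : X => rho / (2 * (`|u| + 1)).
have sig0 u : 0 < sig u by rewrite divr_gt0 // mulr_gt0 // ltr_pwDr // normr_ge0.
have sigu u : `|sig u *: u| < rho.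
  rewrite normrZ gtr0_norm // /sig.
  have u0 := normr_ge0 u.
  rewrite mulrAC ltr_pdivrMr; last by rewrite mulr_gt0 // ltr_pwDr.
  nra.
pose K := 2 * N - m.
have lowb u e : S u e -> - K / sig u <= e.
  move=> [t [x [z [t0 [Dx [Dz [exz ->]]]]]]].
  have sg := sig0 u.
  have := sigu u; rewrite -normrN -scaleNr => /rep [x' [z' [Dx' [Dz' [Fx' [Fz' exz']]]]]].
  pose lam := sig u / (t + sig u).
  have lam01 : 0 < lam < 1.
    apply/andP; split; first by rewrite divr_gt0 // addr_gt0.
    by rewrite ltr_pdivrMr ?addr_gt0 // mul1r ltr_pwDl.
  have [DX FX] := cvx1 _ _ _ Dx Dx' lam01.
  have [DZ FZ] := cvx2 _ _ _ Dz Dz' lam01.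
  have eXZ : lam *: x + (1 - lam) *: x' = lam *: z + (1 - lam) *: z'.
    apply/eqP; rewrite -subr_eq0 algD exz exz' !scalerA -scalerDl.
    suff -> : lam * t + (1 - lam) * - sig u = 0 by rewrite scale0r.
    rewrite /lam; field; apply/lt0r_neq0; exact: addr_gt0.
  have DZ' : D2 (lam *: x + (1 - lam) *: x') by rewrite eXZ.
  have := hm _ DX DZ'; rewrite [in F2 _]eXZ => hmX.
  have l0 : 0 < lam by case/andP: lam01.
  have l1 : lam < 1 by case/andP: lam01.
  have hA : m <= lam * (F1 x + F2 z) + (1 - lam) * (2 * N).
    have l1' : 0 <= 1 - lam by lra.
    have p1 := ler_wpM2l l1' Fx'.
    have p2 := ler_wpM2l l1' Fz'.
    lra.
  have e1 : lam * (t + sig u) = sig u by rewrite /lam divfK // lt0r_neq0 // addr_gt0.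
  have e2 : (1 - lam) * (t + sig u) = t by rewrite mulrBl e1 mul1r addrK.
  have hB : m * (t + sig u) <= sig u * (F1 x + F2 z) + t * (2 * N).
    have ts : 0 < t + sig u by rewrite addr_gt0.
    have := ler_wpM2r (ltW ts) hA.
    have -> : (lam * (F1 x + F2 z) + (1 - lam) * (2 * N)) * (t + sig u) =
      (lam * (t + sig u)) * (F1 x + F2 z) + ((1 - lam) * (t + sig u)) * (2 * N) by ring.
    by rewrite e1 e2.
  have ht : 0 < t * sig u by rewrite mulr_gt0.
  rewrite -subr_ge0 (_ : _ - _ = (sig u * (F1 x + F2 z - m) + t * K) / (t * sig u)).
    by apply: divr_ge0; [rewrite /K; nra | exact: ltW].
  by field; apply/andP; split; apply: lt0r_neq0.
have Sne u : S u !=set0.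
  have [x [z [Dx [Dz e]]]] := cq u.
  exists ((F1 x + F2 z - m) / 1), 1, x, z; do ![split => //]; by rewrite scale1r.
have Slb u : has_lbound (S u) by exists (- K / sig u) => e; exact: lowb.
have ple u e : S u e -> p u <= e by move=> Se; apply: ge_inf.
have upb u : p u <= K / sig u.
  have [x [z [Dx [Dz [Fx [Fz e]]]]]] := rep _ (sigu u).
  apply: le_trans (ple u _ _) _.
    by exists (sig u), x, z; do ![split => //].
  rewrite ler_pM2r ?invr_gt0 // /K; lra.
have sp : subl p.
  split.
  - move=> u w; rewrite -lerBlDr; apply: lb_le_inf; first exact: Sne. move=> e1 Se1.
    suff : p (u + w) - e1 <= p w by move=> h; lra.
    apply: lb_le_inf; first exact: Sne. move=> e2 Se2.
    case: Se1 => [t1 [x1 [z1 [t10 [Dx1 [Dz1 [exz1 ->]]]]]]].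
    case: Se2 => [t2 [x2 [z2 [t20 [Dx2 [Dz2 [exz2 ->]]]]]]].
    pose lam := t2 / (t1 + t2).
    pose T := t1 * t2 / (t1 + t2).
    have t12 : 0 < t1 + t2 by rewrite addr_gt0.
    have lam01 : 0 < lam < 1.
      apply/andP; split; first by rewrite divr_gt0.
      by rewrite ltr_pdivrMr // mul1r ltr_pwDl.
    have T0 : 0 < T by rewrite divr_gt0 // mulr_gt0.
    have [DX FX] := cvx1 _ _ _ Dx1 Dx2 lam01.
    have [DZ FZ] := cvx2 _ _ _ Dz1 Dz2 lam01.
    have eT : lam *: x1 + (1 - lam) *: x2 - (lam *: z1 + (1 - lam) *: z2) = T *: (u + w).
      rewrite algD exz1 exz2 !scalerA scalerDr.
      have -> : lam * t1 = T by rewrite /lam /T; field; apply: lt0r_neq0.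
      have -> : (1 - lam) * t2 = T by rewrite /lam /T; field; apply: lt0r_neq0.
      by [].
    have := ple (u + w) _ (ex_intro _ T (ex_intro _ _ (ex_intro _ _
      (conj T0 (conj DX (conj DZ (conj eT erefl))))))).
    move=> h; suff : (F1 (lam *: x1 + (1 - lam) *: x2) + F2 (lam *: z1 + (1 - lam) *: z2) - m) / T
       <= (F1 x1 + F2 z1 - m) / t1 + (F1 x2 + F2 z2 - m) / t2 by lra.
    have -> : (F1 x1 + F2 z1 - m) / t1 + (F1 x2 + F2 z2 - m) / t2 =
      (lam * (F1 x1 + F2 z1 - m) + (1 - lam) * (F1 x2 + F2 z2 - m)) / T.
      rewrite /lam /T; field; do ?[apply/andP; split]; apply: lt0r_neq0 => //.
    by rewrite ler_pM2r ?invr_gt0 //; lra.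
  - move=> c u c0; rewrite -ler_pdivrMl //; apply: lb_le_inf; first exact: Sne. move=> e Se.
    case: Se => [t [x [z [t0 [Dx [Dz [exz ->]]]]]]].
    rewrite ler_pdivrMl //.
    have tc0 : 0 < t / c by rewrite divr_gt0.
    have exz' : x - z = (t / c) *: (c *: u) by rewrite scalerA divfK ?lt0r_neq0.
    apply: le_trans (ple (c *: u) _ (ex_intro _ (t / c) (ex_intro _ _ (ex_intro _ _
      (conj tc0 (conj Dx (conj Dz (conj exz' erefl)))))))) _.
    rewrite le_eqVlt; apply/orP; left; apply/eqP; field.
    by apply/andP; split; apply: lt0r_neq0.
have [l [lD [lZ lp]]] := @HahnBanach R X p sp.
exists l; split => //; split => //; split.
  move=> r1; exists (`|K| * (2 * (r1 + 1)) / rho) => x nx.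
  have bnd v : `|v| <= r1 -> l v <= `|K| * (2 * (r1 + 1)) / rho.
    move=> nv; apply: le_trans (lp v) _; apply: le_trans (upb v) _.
    have -> : K / sig v = K * (2 * (`|v| + 1)) / rho.
      rewrite /sig; field; apply/andP; split; apply: lt0r_neq0 => //.
    rewrite ler_pM2r ?invr_gt0 //.
    apply: le_trans (ler_norm _) _; rewrite normrM; apply: ler_wpM2l => //.
    rewrite ger0_norm; last by rewrite mulr_ge0 // addr_ge0.
    by rewrite ler_pM2l // lerD2r.
  have lN : l (- x) = - l x by rewrite -scaleN1r lZ mulN1r.
  rewrite ler_norml; apply/andP; split; last exact: bnd.
  have := bnd (- x); rewrite normrN lN => /(_ nx); lra.
move=> x z Dx Dz.
suff : l (x - z) <= F1 x + F2 z - m by lra.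
apply: le_trans (lp _) _; apply: (le_trans (ple _ ((F1 x + F2 z - m) / 1) _)).
  by exists 1, x, z; do ![split => //]; rewrite scale1r.
by rewrite divr1.
Qed.
End G.

Section Bil.
Variables (R : realType) (B : completeNormedModType R) (bf : B -> B -> R).
Hypothesis sb : sym_bilinear bf.

Lemma bf0l c : bf 0 c = 0.
Proof.
have := (proj2 sb) 1 0 0 c; rewrite scaler0 addr0 mul1r => h.
lra.
Qed.
Lemma bfZl a x c : bf (a *: x) c = a * bf x c.
Proof. by have := (proj2 sb) a x 0 c; rewrite addr0 bf0l addr0. Qed.
Lemma bfDl x y c : bf (x + y) c = bf x c + bf y c.
Proof. by have := (proj2 sb) 1 x y c; rewrite scale1r mul1r. Qed.
Lemma bfNl x c : bf (- x) c = - bf x c.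
Proof. by rewrite -scaleN1r bfZl mulN1r. Qed.
Lemma bfBl x y c : bf (x - y) c = bf x c - bf y c.
Proof. by rewrite bfDl bfNl. Qed.
Lemma bfC x y : bf x y = bf y x.
Proof. exact: (proj1 sb). Qed.
Lemma bfDr x y c : bf c (x + y) = bf c x + bf c y.
Proof. by rewrite !(bfC c) bfDl. Qed.
Lemma bfBr x y c : bf c (x - y) = bf c x - bf c y.
Proof. by rewrite !(bfC c) bfBl. Qed.
Lemma qfB x y : qf bf (x - y) = qf bf x - bf x y + qf bf y.
Proof. by rewrite /qf bfBl !bfBr (bfC y x); field. Qed.
End Bil.
Arguments bf0l {R B bf}.
Arguments bfZl {R B bf}.
Arguments bfDl {R B bf}.
Arguments bfNl {R B bf}.
Arguments bfBl {R B bf}.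
Arguments bfC {R B bf}.
Arguments bfDr {R B bf}.
Arguments bfBr {R B bf}.
Arguments qfB {R B bf}.

Lemma bf_bound (R : realType) (B : completeNormedModType R) (bf : B -> B -> R) :
  SSDB bf -> forall u c, `|bf u c| <= `|u| * `|c|.
Proof.
move=> [_ [sb [hn _]]] u c.
have [->|u0] := eqVneq u 0; first by rewrite bf0l // normr0 normr0 mul0r.
have nu : 0 < `|u| by rewrite normr_gt0.
have := (proj1 (hn c)) (`|u|^-1 *: u).
rewrite normrZ ger0_norm ?invr_ge0 ?normr_ge0 // mulVf ?gt_eqF // => /(_ (lexx _)).
rewrite bfZl // normrM ger0_norm ?invr_ge0 ?normr_ge0 // => h.
by rewrite -ler_pdivrMl // mulrC.
Qed.

Arguments bf_bound {R B bf}.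

Local Open Scope ereal_scope.

Lemma fin_le (R : realType) (e : \bar R) (a : R) : e != -oo -> e <= a%:E ->
  e \is a fin_num /\ (fine e <= a)%R.
Proof. by case: e => [r| |] //= _; rewrite lee_fin. Qed.
Arguments fin_le {R}.

Lemma nfin_pinf (R : realType) (e : \bar R) : e != -oo -> ~~ (e \is a fin_num) -> e = +oo.
Proof. by case: e. Qed.
Arguments nfin_pinf {R}.

Lemma lsc_seq (R : realType) (X : completeNormedModType R) (h : X -> \bar R) (s : nat -> X) y (a : R) :
  lower_semicontinuous h -> s @ \oo --> y ->
  (forall eps : R, (0 < eps)%R -> \forall n \near \oo, h (s n) <= (a + eps)%:E) ->
  h y <= a%:E.
Proof.
move=> lsc sy ev; rewrite leNgt; apply/negP => hy.
have [a' aa' a'h] : exists2 a' : R, (a < a')%R & a'%:E < h y.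
  move: hy; case: (h y) => [r| |] //=.
  - rewrite lte_fin => ar; exists ((a + r) / 2)%R; rewrite ?lte_fin; lra.
  - by move=> _; exists (a + 1)%R; rewrite ?ltry //; lra.
have [V nV hV] := lsc y ((a + a') / 2)%R ltac:(apply: lt_trans a'h; rewrite lte_fin; lra).
have e0 : (0 < (a' - a) / 2)%R by rewrite divr_gt0 // subr_gt0.
have := ev _ e0; have : \forall n \near \oo, V (s n) by exact: sy.
move=> h1 h2; have [n [Vn hn]] := (filter_ex (filterI h1 h2)).
have := hV _ Vn; rewrite ltNge; move/negP; apply.
by apply: le_trans hn _; rewrite lee_fin; lra.
Qed.
Arguments lsc_seq {R X}.

Theorem theorem4p6 (R : realType) (B : completeNormedModType R)
  (bf : B -> B -> R) (f g : B -> \bar R) :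
  SSDB bf ->
  proper_fun f -> convex_fun f -> lower_semicontinuous f -> BC_fun bf f ->
  proper_fun g -> convex_fun g -> lower_semicontinuous g -> TBC_fun bf g ->
  (diff_is_all (edom f) (edom g) <-> diff_is_all (Pq bf f) (Nq bf g)).
Proof.
move=> ssdb [fNy _] fcvx flsc [_ [_ fBC]] [gNy _] gcvx glsc [_ [_ gBC]].
have sb := proj1 (proj2 ssdb).
split; last first.
  move=> h b; have [x [y [Px [Ny ->]]]] := h b.
  by exists x, y; split; [rewrite /edom /= Px | split => //; rewrite /edom /= Ny].
move=> hdom b.
pose q := qf bf.
pose D1 := edom f.
pose F1 := fun x => fine (f x).
pose D2 := [set y | edom g (y - b)%R].
pose F2 := fun y => (fine (g (y - b)) - bf y b + q b)%R.
have fE x : D1 x -> f x = (F1 x)%:E by move=> Dx; rewrite /F1 fineK.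
have gE y : edom g y -> g y = (fine (g y))%:E by move=> Dy; rewrite fineK.
have cvx1 : forall x y (t : R), D1 x -> D1 y -> (0 < t < 1)%R ->
  D1 (t *: x + (1 - t) *: y)%R /\ (F1 (t *: x + (1 - t) *: y) <= t * F1 x + (1 - t) * F1 y)%R.
  move=> x y t Dx Dy t01.
  have := fcvx x y t t01; rewrite (fE x Dx) (fE y Dy) -!EFinM -EFinD.
  by move/(fin_le _ _ (fNy _)).
have cvx2 : forall x y (t : R), D2 x -> D2 y -> (0 < t < 1)%R ->
  D2 (t *: x + (1 - t) *: y)%R /\ (F2 (t *: x + (1 - t) *: y) <= t * F2 x + (1 - t) * F2 y)%R.
  move=> x y t Dx Dy t01.
  have e : (t *: x + (1 - t) *: y - b = t *: (x - b) + (1 - t) *: (y - b))%R.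
    by rewrite !scalerBr addrACA -opprD -scalerDl (addrC t) subrK scale1r.
  have := gcvx (x - b)%R (y - b)%R t t01; rewrite -e (gE _ Dx) (gE _ Dy) -!EFinM -EFinD.
  move/(fin_le _ _ (gNy _)) => [h1 h2]; split => //.
  rewrite /F2 (bfDl sb) !(bfZl sb); lra.
have cl1 : forall (s : nat -> B) x M, (forall n, D1 (s n) /\ (F1 (s n) <= M)%R) ->
    s @ \oo --> x -> D1 x /\ (F1 x <= M)%R.
  move=> s x M hs sx; apply: (fin_le _ _ (fNy _)).
  apply: (lsc_seq _ _ _ _ flsc sx) => eps e0; apply: nearW => n.
  have [Dn Fn] := hs n; rewrite fE // lee_fin; lra.
have cl2 : forall (s : nat -> B) x M, (forall n, D2 (s n) /\ (F2 (s n) <= M)%R) ->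
    s @ \oo --> x -> D2 x /\ (F2 x <= M)%R.
  move=> s x M hs sx.
  have sbx : (fun n => s n - b)%R @ \oo --> (x - b)%R.
    by apply: cvgB => //; exact: cvg_cst.
  have := lsc_seq _ _ _ (M + bf x b - q b)%R glsc sbx.
  have nb := normr_ge0 b.
  move=> hl.
  have ev : forall eps : R, (0 < eps)%R -> \forall n \near \oo,
      g (s n - b)%R <= (M + bf x b - q b + eps)%:E.
    move=> eps e0.
    have d0 : (0 < eps / (`|b| + 1))%R by rewrite divr_gt0 // ltr_pwDr.
    move/cvgrPdist_lt: sx => /(_ _ d0); apply: filterS => n hn.
    have [Dn Fn] := hs n.
    rewrite gE // lee_fin.
    have := bf_bound ssdb (s n - x)%R b; rewrite (bfBl sb) => hb; rewrite distrC in hn.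
    have : (`|s n - x| * `|b| <= eps / (`|b| + 1) * `|b|)%R.
      by apply: ler_wpM2r => //; apply: ltW.
    have : (eps / (`|b| + 1) * `|b| <= eps)%R.
      rewrite mulrAC ler_pdivrMr ?ltr_pwDr //; nra.
    move: Fn; rewrite /F2 => Fn.
    have := ler_norm (bf (s n) b - bf x b)%R.
    lra.
  have [Dx Fx] := fin_le _ _ (gNy _) (hl ev); split => //.
  rewrite /F2; lra.
have cq : forall u, exists x z, D1 x /\ D2 z /\ u = (x - z)%R.
  move=> u; have [x [y [Dx [Dy e]]]] := hdom (u + b)%R.
  exists x, (y + b)%R; split => //; split; first by rewrite /D2 /= addrK.
  by rewrite opprD addrA -e addrK.
have hm : forall z, D1 z -> D2 z -> (0 <= F1 z + F2 z)%R.
  move=> z Dz Dz'.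
  have := proj2 (fBC z); rewrite fE // lee_fin => h1.
  have := proj2 (gBC (z - b)%R); rewrite gE // lee_fin => h2.
  rewrite /F2 /q; move: h1 h2; rewrite (qfB sb) /qf; lra.
have [l [lD [lZ [lb lineq]]]] := @core R B D1 D2 F1 F2 cvx1 cvx2 cl1 cl2 cq 0%R hm.
have llin : linear (l : B -> R^o).
  by move=> a u v; rewrite lD lZ.
pose L : {linear B -> R^o} := HB.pack (l : B -> R^o) (GRing.isLinear.Build _ _ _ _ _ llin).
have Lc : continuous L.
  apply: linear_continuous; apply/(proj1 (bounded_landau L)) => r1.
  exact: lb.
have [c hc] := (proj2 (proj2 (proj2 ssdb))) L Lc.
have hcl x : l x = bf x c by have := hc x.
pose K := (bf b c - q b)%R.
have key : forall x y, D1 x -> edom g y ->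
    (bf x c - F1 x + (bf y (b - c) - fine (g y)) <= K)%R.
  move=> x y Dx Dy.
  have Dyb : D2 (y + b)%R by rewrite /D2 /= addrK.
  have := lineq x (y + b)%R Dx Dyb.
  rewrite hcl /F2 addrK add0r /K /q /qf opprD addrA !(bfBl sb) !(bfDl sb) (bfBr sb).
  lra.
have fc : f c = (q c)%:E.
  apply/eqP; rewrite eq_le (proj2 (fBC c)) andbT.
  apply: le_trans (proj1 (fBC c)) _.
  apply: ge_ereal_sup => _ [x _ <-].
  have [Dx|nDx] := boolP (f x \is a fin_num); last first.
    by rewrite (nfin_pinf _ (fNy x) nDx) /= leNye.
  rewrite (fE x Dx) -EFinB lee_fin.
  have : g (c - b)%R <= (K - (bf x c - F1 x))%:E.
    apply: le_trans (proj1 (gBC (c - b)%R)) _; rewrite opprB.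
    apply: ge_ereal_sup => _ [y _ <-].
    have [Dy|nDy] := boolP (g y \is a fin_num); last first.
      by rewrite (nfin_pinf _ (gNy y) nDy) /= leNye.
    rewrite (gE y Dy) -EFinB lee_fin; have := key x y Dx Dy; lra.
  move=> h; have := le_trans (proj2 (gBC (c - b)%R)) h; rewrite lee_fin.
  rewrite (qfB sb) /K /q (bfC sb c b); lra.
have gc : g (c - b)%R = (- q (c - b)%R)%:E.
  apply/eqP; rewrite eq_le (proj2 (gBC _)) andbT.
  apply: le_trans (proj1 (gBC (c - b)%R)) _; rewrite opprB.
  apply: ge_ereal_sup => _ [y _ <-].
  have [Dy|nDy] := boolP (g y \is a fin_num); last first.
    by rewrite (nfin_pinf _ (gNy y) nDy) /= leNye.
  rewrite (gE y Dy) -EFinB lee_fin.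
  have : f c <= (K - (bf y (b - c) - fine (g y)))%:E.
    apply: le_trans (proj1 (fBC c)) _.
    apply: ge_ereal_sup => _ [x _ <-].
    have [Dx|nDx] := boolP (f x \is a fin_num); last first.
      by rewrite (nfin_pinf _ (fNy x) nDx) /= leNye.
    rewrite (fE x Dx) -EFinB lee_fin; have := key x y Dx Dy; lra.
  move=> h; have := le_trans (proj2 (fBC c)) h; rewrite lee_fin.
  rewrite /K /q (qfB sb) (bfC sb c b); lra.
exists c, (c - b)%R; split; first exact: fc.
split; first exact: gc.
by rewrite opprB addrCA subrr addr0.
Qed.
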